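(* Let $\{x,y\}$ be Cartesian coordinates on $\mathbb{E}^2$, $z=\frac12(x-iy)$, $\bar z=\frac12(x+iy)$, and let $\xi=\xi_{\{\mu\}}$ be a GCKV with parameters $\mu=(\mu_0,\mu_1,\mu_2)\in\mathbb{C}^3$. Let $\gamma,\delta\in\mathbb{C}$ be any pair with $\frac12\delta^2\mu_2-\gamma\delta\mu_1+\gamma^2\mu_0=1$ and set $\alpha=\frac12(\delta\mu_2-\gamma\mu_1)$, $\beta=\frac12\delta\mu_1-\gamma\mu_0$. Then: (i) In the coordinate system $\{\omega,\bar\omega\}$ defined by $\omega=(\alpha z+\beta)/(\gamma z+\delta)$, $\xi$ takes the canonical form $\xi=(\mu_0'+\omega^2)\partial_\omega+(\bar\mu_0'+\bar\omega^2)\partial_{\bar\omega}$, where $4\mu_0':=2\mu_0\mu_2-\mu_1^2$. (ii) Any other coordinate system $\{\omega',\bar\omega'\}$ (obtained from $\omega$ by a Möbius coordinate change) in which $\xi$ is in canonical form is related to $\{\omega,\bar\omega\}$ by $\omega'=(\delta'\omega-\gamma'\mu_0')/(\gamma'\omega+\delta')$ with $\delta'^2+\mu_0'\gamma'^2=1$. (iii) Write $4\mu_0'=Qe^{-2i\theta}$ with $Q\ge0$, $\theta\in[0,\pi)$ ($\theta$ arbitrary if $Q=0$). Define the complex coordinate $\zeta:=\frac12(v_1+iv_2)$ by $$\omega=\frac{i\sqrt Q\,e^{-i\theta}}{2}\,\frac{1+e^{2i\sqrt Q e^{-i\theta}\zeta}}{1-e^{2i\sqrt Q e^{-i\theta}\zeta}}\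 \ (Q>0),\qquad \omega=-\frac{1}{2\zeta}\ \ (Q=0).$$ Then the (locally defined) real coordinates $\{v_1,v_2\}$ are adapted to $\xi$ and to $\xi^\perp:=\xi_{\{i\mu\}}$, namely $\xi=\partial_{v_1}$ and $\xi^\perp=\partial_{v_2}$. (iv) For $u=(u_0,u_1,u_2,u_3)\in\mathbb{R}^4\setminus\{0\}$, the metric $g_u:=\Omega_u^{-2}(dx^2+dy^2)$, $\Omega_u:=u_0(1+z\bar z)+u_1(1-z\bar z)+u_2(z+\bar z)+u_3\,i(z-\bar z)$, takes in the coordinates $\{v_1,v_2\}$ the form $$g_u=\frac{dv_1^2+dv_2^2}{\big((u_0'-u_1')f_++(u_0'+u_1')f_-+u_2'f_2+u_3'f_3\big)^2},$$ where $u'=(u_0',u_1',u_2',u_3')^T:=\Lambda\,(u_0,u_1,u_2,u_3)^T$ and $\Lambda$, $f_\pm,f_2,f_3$ are as in the context.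
   Context: A GCKV with parameters $\mu\in\mathbb{C}^3$ is $\xi_{\{\mu\}}=(\mu_0+\mu_1z+\frac12\mu_2z^2)\partial_z+(\bar\mu_0+\bar\mu_1\bar z+\frac12\bar\mu_2\bar z^2)\partial_{\bar z}$ (the conformal Killing vectors of $dx^2+dy^2$ that extend smoothly to the Riemann sphere); in a complex coordinate $w$, $\xi$ is in canonical form if it reads $(c+w^2)\partial_w+(\bar c+\bar w^2)\partial_{\bar w}$ for some $c\in\mathbb{C}$. Functions: $h_1:=v_1\cos\theta+v_2\sin\theta$, $h_2:=v_2\cos\theta-v_1\sin\theta$; for $Q>0$: $f_+=\frac14(\cosh(\sqrt Q h_2)+\cos(\sqrt Q h_1))$, $f_-=\frac1Q(\cosh(\sqrt Q h_2)-\cos(\sqrt Q h_1))$, $f_2=\frac1{\sqrt Q}(\sin\theta\sinh(\sqrt Q h_2)-\cos\theta\sin(\sqrt Q h_1))$, $f_3=-\frac1{\sqrt Q}(\cos\theta\sinh(\sqrt Q h_2)+\sin\theta\sin(\sqrt Q h_1))$; for $Q=0$: $f_+=\frac12$, $f_-=\frac12(v_1^2+v_2^2)$, $f_2=-v_1$, $f_3=-v_2$. $\Lambda=\frac12 N$ with the rows of $N$: row 0: $\big(\alpha\bar\alpha+\beta\bar\beta+\gamma\bar\gamma+\delta\bar\delta,\ \alpha\bar\alpha-\beta\bar\beta+\gamma\bar\gamma-\delta\bar\delta,\ -\alpha\bar\beta-\beta\bar\alpha-\gamma\bar\delta-\delta\bar\gamma,\ i(\alpha\bar\beta-\beta\bar\alpha+\gamma\bar\delta-\delta\bar\gamma)\big)$;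 row 1: $\big(\alpha\bar\alpha+\beta\bar\beta-\gamma\bar\gamma-\delta\bar\delta,\ \alpha\bar\alpha-\beta\bar\beta-\gamma\bar\gamma+\delta\bar\delta,\ -\alpha\bar\beta-\beta\bar\alpha+\gamma\bar\delta+\delta\bar\gamma,\ i(\alpha\bar\beta-\beta\bar\alpha-\gamma\bar\delta+\delta\bar\gamma)\big)$; row 2: $\big(-(\alpha\bar\gamma+\beta\bar\delta+\gamma\bar\alpha+\delta\bar\beta),\ -\alpha\bar\gamma+\beta\bar\delta-\gamma\bar\alpha+\delta\bar\beta,\ \alpha\bar\delta+\beta\bar\gamma+\gamma\bar\beta+\delta\bar\alpha,\ i(-\alpha\bar\delta+\beta\bar\gamma-\gamma\bar\beta+\delta\bar\alpha)\big)$; row 3: $\big(i(-\alpha\bar\gamma-\beta\bar\delta+\gamma\bar\alpha+\delta\bar\beta),\ i(-\alpha\bar\gamma+\beta\bar\delta+\gamma\bar\alpha-\delta\bar\beta),\ i(\alpha\bar\delta+\beta\bar\gamma-\gamma\bar\beta-\delta\bar\alpha),\ \alpha\bar\delta-\beta\bar\gamma-\gamma\bar\beta+\delta\bar\alpha\big)$. *)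

(* Defs.v *)
From Stdlib Require Import Reals.
From Coquelicot Require Import Coquelicot.

Open Scope R_scope.

(** Points of E^2 are pairs p = (x, y) of Cartesian coordinates; a (real)
    vector field X assigns to p the components (X^x, X^y) of X^x d_x + X^y d_y. *)

Definition zc (p : R * R) : C := (fst p / 2, - snd p / 2).

Definition dir_deriv (f : R * R -> R) (p a : R * R) (l : R) : Prop :=
  is_derive (fun t : R => f (fst p + t * fst a, snd p + t * snd a)) 0 l.

Definition deriv_along (X : R * R -> R * R) (f : R * R -> R) (p : R * R) (l : R)
  : Prop := dir_deriv f p (X p) l.

Definition cderiv_along (X : R * R -> R * R) (f : R * R -> C) (p : R * R) (l : C)
  : Prop :=
  deriv_along X (fun q => Re (f q)) p (Re l) /\ deriv_along X (fun q => Im (f q)) p (Im l).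

Open Scope C_scope.

Definition gckv_coef (mu0 mu1 mu2 : C) (z : C) : C :=
  mu0 + mu1 * z + / RtoC 2 * mu2 * z ^ 2.

(** The GCKV xi_{mu} = F d_z + conj(F) d_zbar, F = gckv_coef mu, as a real
    vector field on E^2.  With z = (x - i y)/2 one has x = z + zbar,
    y = i (z - zbar), so d_z = d_x + i d_y and
    F d_z + conj F d_zbar = 2 Re F d_x - 2 Im F d_y. Equivalently, this is the
    unique real vector field X with X(z) = F(z). *)
Definition gckv (mu0 mu1 mu2 : C) (p : R * R) : R * R :=
  ((2 * Re (gckv_coef mu0 mu1 mu2 (zc p)))%R, (- 2 * Im (gckv_coef mu0 mu1 mu2 (zc p)))%R).

Definition cexp (w : C) : C := ((exp (Re w) * cos (Im w))%R, (exp (Re w) * sin (Im w))%R).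

Definition mu0p (mu0 mu1 mu2 : C) : C := / RtoC 4 * (RtoC 2 * mu0 * mu2 - mu1 ^ 2).

Definition omega_of_zeta (Q theta : R) (zeta : C) : C :=
  if Rle_dec Q 0 then - / (RtoC 2 * zeta)
  else
    let k := RtoC (sqrt Q) * cexp ((0%R, (- theta)%R)) in
    let e := cexp (RtoC 2 * Ci * k * zeta) in
    Ci * k / RtoC 2 * ((RtoC 1 + e) / (RtoC 1 - e)).

Definition omega_of_zeta_defined (Q theta : R) (zeta : C) : Prop :=
  if Rle_dec Q 0 then zeta <> RtoC 0
  else
    let k := RtoC (sqrt Q) * cexp ((0%R, (- theta)%R)) in
    RtoC 1 - cexp (RtoC 2 * Ci * k * zeta) <> RtoC 0.

Close Scope C_scope.

Definition h1 (theta v1 v2 : R) : R := v1 * cos theta + v2 * sin theta.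
Definition h2 (theta v1 v2 : R) : R := v2 * cos theta - v1 * sin theta.

Definition f_plus (Q theta v1 v2 : R) : R :=
  if Rle_dec Q 0 then 1 / 2
  else / 4 * (cosh (sqrt Q * h2 theta v1 v2) + cos (sqrt Q * h1 theta v1 v2)).
Definition f_minus (Q theta v1 v2 : R) : R :=
  if Rle_dec Q 0 then 1 / 2 * (v1 ^ 2 + v2 ^ 2)
  else / Q * (cosh (sqrt Q * h2 theta v1 v2) - cos (sqrt Q * h1 theta v1 v2)).
Definition f_2 (Q theta v1 v2 : R) : R :=
  if Rle_dec Q 0 then - v1
  else / sqrt Q * (sin theta * sinh (sqrt Q * h2 theta v1 v2)
                   - cos theta * sin (sqrt Q * h1 theta v1 v2)).
Definition f_3 (Q theta v1 v2 : R) : R :=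
  if Rle_dec Q 0 then - v2
  else - / sqrt Q * (cos theta * sinh (sqrt Q * h2 theta v1 v2)
                     + sin theta * sin (sqrt Q * h1 theta v1 v2)).

Open Scope C_scope.

Definition Nmat (a b g d : C) (i j : nat) : C :=
  let a' := Cconj a in let b' := Cconj b in let g' := Cconj g in let d' := Cconj d in
  match i, j with
  | 0%nat, 0%nat => a*a' + b*b' + g*g' + d*d'
  | 0%nat, 1%nat => a*a' - b*b' + g*g' - d*d'
  | 0%nat, 2%nat => - (a*b') - b*a' - g*d' - d*g'
  | 0%nat, 3%nat => Ci * (a*b' - b*a' + g*d' - d*g')
  | 1%nat, 0%nat => a*a' + b*b' - g*g' - d*d'
  | 1%nat, 1%nat => a*a' - b*b' - g*g' + d*d'
  | 1%nat, 2%nat => - (a*b') - b*a' + g*d' + d*g'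
  | 1%nat, 3%nat => Ci * (a*b' - b*a' - g*d' + d*g')
  | 2%nat, 0%nat => - (a*g' + b*d' + g*a' + d*b')
  | 2%nat, 1%nat => - (a*g') + b*d' - g*a' + d*b'
  | 2%nat, 2%nat => a*d' + b*g' + g*b' + d*a'
  | 2%nat, 3%nat => Ci * (- (a*d') + b*g' - g*b' + d*a')
  | 3%nat, 0%nat => Ci * (- (a*g') - b*d' + g*a' + d*b')
  | 3%nat, 1%nat => Ci * (- (a*g') + b*d' + g*a' - d*b')
  | 3%nat, 2%nat => Ci * (a*d' + b*g' - g*b' - d*a')
  | 3%nat, 3%nat => a*d' - b*g' - g*b' + d*a'
  | _, _ => 0
  end.

Definition uprime (a b g d : C) (u0 u1 u2 u3 : R) (i : nat) : C :=
  / RtoC 2 * (Nmat a b g d i 0 * RtoC u0 + Nmat a b g d i 1 * RtoC u1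
              + Nmat a b g d i 2 * RtoC u2 + Nmat a b g d i 3 * RtoC u3).

Definition Omega (u0 u1 u2 u3 : R) (z : C) : C :=
  RtoC u0 * (RtoC 1 + z * Cconj z) + RtoC u1 * (RtoC 1 - z * Cconj z)
  + RtoC u2 * (z + Cconj z) + RtoC u3 * (Ci * (z - Cconj z)).

Close Scope C_scope.

(* Main.v *)
Require Import Defs.
From Stdlib Require Import Reals Lra Classical.
From Coquelicot Require Import Coquelicot.

Open Scope R_scope.
Open Scope R_scope.

Lemma Rd_eq (f : R -> R) (x l l' : R) : is_derive f x l -> l = l' -> is_derive f x l'.
Proof. intros H ->; exact H. Qed.
Lemma Rd_plus (f g : R -> R) (x df dg : R) : is_derive f x df -> is_derive g x dg ->
  is_derive (fun y => f y + g y) x (df + dg).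
Proof. intros; exact (is_derive_plus f g x df dg H H0). Qed.
Lemma Rd_minus (f g : R -> R) (x df dg : R) : is_derive f x df -> is_derive g x dg ->
  is_derive (fun y => f y - g y) x (df - dg).
Proof. intros; exact (is_derive_minus f g x df dg H H0). Qed.
Lemma Rd_mult (f g : R -> R) x df dg : is_derive f x df -> is_derive g x dg ->
  is_derive (fun y => f y * g y) x (df * g x + f x * dg).
Proof. intros; apply (is_derive_mult f g x df dg H H0). intros; apply Rmult_comm. Qed.
Lemma Rd_const (a x : R) : is_derive (fun _ => a) x 0.
Proof. exact (is_derive_const a x). Qed.
Lemma Rd_comp (f g : R -> R) x df dg : is_derive f (g x) df -> is_derive g x dg ->
  is_derive (fun y => f (g y)) x (dg * df).
Proof. intros; exact (is_derive_comp f g x df dg H H0). Qed.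
Lemma Rd_inv (f : R -> R) x l : is_derive f x l -> f x <> 0 ->
  is_derive (fun y => / f y) x (- l / f x ^ 2).
Proof. apply is_derive_inv. Qed.
Lemma Rd_opp (f : R -> R) (x l : R) : is_derive f x l -> is_derive (fun y => - f y) x (- l).
Proof. intros H. apply Rd_eq with (0 - l); [|exact (Rminus_0_l l)]. eapply is_derive_ext.
  2: exact (Rd_minus _ _ _ _ _ (Rd_const 0 x) H). intros; simpl; ring. Qed.
Lemma Rd_id (x : R) : is_derive (fun y : R => y) x 1.
Proof. exact (is_derive_id x). Qed.

Open Scope R_scope.
Open Scope R_scope.

Definition cd (h : R -> C) (t : R) (l : C) : Prop :=
  is_derive (fun s => Re (h s)) t (Re l) /\ is_derive (fun s => Im (h s)) t (Im l).

Lemma cd_eq h t l l' : cd h t l -> l = l' -> cd h t l'.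
Proof. intros H ->; exact H. Qed.

Lemma cd_ext_loc (f g : R -> C) t l : locally t (fun s => f s = g s) -> cd f t l -> cd g t l.
Proof.
  intros Hl [H1 H2]; split.
  - eapply is_derive_ext_loc; [|exact H1]. eapply filter_imp; [|exact Hl]. intros s ->; reflexivity.
  - eapply is_derive_ext_loc; [|exact H2]. eapply filter_imp; [|exact Hl]. intros s ->; reflexivity.
Qed.

Lemma cd_const (c : C) t : cd (fun _ => c) t (RtoC 0).
Proof. split; apply Rd_const. Qed.

Lemma cd_plus f g t lf lg : cd f t lf -> cd g t lg -> cd (fun s => (f s + g s)%C) t (lf + lg)%C.
Proof.
  intros [F1 F2] [G1 G2]; split; simpl.
  - apply (Rd_plus _ _ _ _ _ F1 G1).
  - apply (Rd_plus _ _ _ _ _ F2 G2).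
Qed.

Lemma cd_opp f t lf : cd f t lf -> cd (fun s => (- f s)%C) t (- lf)%C.
Proof.
  intros [F1 F2]; split; simpl.
  - apply (Rd_opp _ _ _ F1).
  - apply (Rd_opp _ _ _ F2).
Qed.

Lemma cd_minus f g t lf lg : cd f t lf -> cd g t lg -> cd (fun s => (f s - g s)%C) t (lf - lg)%C.
Proof. intros; apply cd_plus; auto; apply cd_opp; auto. Qed.

Lemma cd_mult f g t lf lg : cd f t lf -> cd g t lg ->
  cd (fun s => (f s * g s)%C) t (lf * g t + f t * lg)%C.
Proof.
  intros [F1 F2] [G1 G2]; split; simpl.
  - eapply Rd_eq. apply Rd_minus; apply Rd_mult; eauto. unfold Re, Im; ring.
  - eapply Rd_eq. apply Rd_plus; apply Rd_mult; eauto. unfold Re, Im; ring.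
Qed.

Lemma cd_inv f t l : cd f t l -> f t <> RtoC 0 ->
  cd (fun s => (/ f s)%C) t (- l / (f t)^2)%C.
Proof.
  intros [F1 F2] Hn.
  assert (Hd : fst (f t) ^ 2 + snd (f t) ^ 2 <> 0).
  { intro E. apply Hn. destruct (f t) as [a b]; simpl in *.
    assert (a = 0) by nra. assert (b = 0) by nra. subst. reflexivity. }
  assert (Hs : is_derive (fun s => fst (f s) ^ 2 + snd (f s) ^ 2) t
                 (2 * fst (f t) * Re l + 2 * snd (f t) * Im l)).
  { eapply Rd_eq. apply Rd_plus; (eapply Rd_eq; [apply Rd_mult; [|apply Rd_mult]; [eauto| eauto | apply Rd_const]|]).
    all: simpl; try reflexivity. ring. }
  split; unfold Cinv; simpl.
  - eapply Rd_eq. apply Rd_mult. exact F1. apply Rd_inv. exact Hs. exact Hd.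
    destruct l as [c d]; unfold Re, Im in *; simpl in *. field; simpl in Hd; repeat split; intro E; apply Hd; nra.
  - eapply Rd_eq. apply Rd_mult. apply (Rd_opp _ _ _ F2). apply Rd_inv. exact Hs. exact Hd.
    destruct l as [c d]; unfold Re, Im in *; simpl in *. field; simpl in Hd; repeat split; intro E; apply Hd; nra.
Qed.

Lemma cd_div f g t lf lg : cd f t lf -> cd g t lg -> g t <> RtoC 0 ->
  cd (fun s => (f s / g s)%C) t ((lf * g t - f t * lg) / (g t)^2)%C.
Proof.
  intros F G Hn. eapply cd_eq. apply cd_mult. exact F. apply cd_inv; eauto.
  cbv beta. field. exact Hn.
Qed.

Lemma cd_cmul (c : C) f t l : cd f t l -> cd (fun s => (c * f s)%C) t (c * l)%C.
Proof. intros F. eapply cd_eq. apply cd_mult. apply cd_const. exact F. cbv beta. ring. Qed.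

Lemma cd_sq f t l : cd f t l -> cd (fun s => (f s ^ 2)%C) t (RtoC 2 * f t * l)%C.
Proof. intros F. eapply cd_eq. eapply cd_ext_loc; [|apply (cd_mult _ _ _ _ _ F F)].
  apply filter_forall; intros; simpl; ring. simpl; ring. Qed.

Lemma cd_cexp f t l : cd f t l -> cd (fun s => cexp (f s)) t (cexp (f t) * l)%C.
Proof.
  intros [F1 F2]; split; unfold cexp; simpl.
  - eapply Rd_eq. apply Rd_mult. apply (Rd_comp exp). apply is_derive_exp. exact F1.
    apply (Rd_comp cos). apply is_derive_cos. exact F2. unfold Re, Im; simpl; ring.
  - eapply Rd_eq. apply Rd_mult. apply (Rd_comp exp). apply is_derive_exp. exact F1.
    apply (Rd_comp sin). apply is_derive_sin. exact F2. unfold Re, Im; simpl; ring.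
Qed.

Lemma cd_line (p a : R * R) t :
  cd (fun s => zc (fst p + s * fst a, snd p + s * snd a)) t ((fst a / 2)%R, (- snd a / 2)%R).
Proof.
  split; unfold zc; simpl.
  - eapply Rd_eq. apply Rd_mult. apply Rd_plus. apply Rd_const. apply Rd_mult. apply Rd_id. apply Rd_const.
    apply Rd_const. simpl. field.
  - eapply Rd_eq. apply Rd_mult. apply Rd_opp. apply Rd_plus. apply Rd_const. apply Rd_mult. apply Rd_id. apply Rd_const.
    apply Rd_const. simpl. field.
Qed.

Lemma cd_unique f t l1 l2 : cd f t l1 -> cd f t l2 -> l1 = l2.
Proof.
  intros [A1 A2] [B1 B2].
  apply is_derive_unique in A1, A2, B1, B2.
  destruct l1, l2; unfold Re, Im in *; simpl in *. congruence.
Qed.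

Open Scope R_scope.
Open Scope R_scope.

Definition line (p a : R * R) (t : R) : R * R := (fst p + t * fst a, snd p + t * snd a).

Lemma line_fd (p a : R * R) :
  @filterdiff R_AbsRing (AbsRing_NormedModule R_AbsRing) (prod_NormedModule R_AbsRing R_NormedModule R_NormedModule)
    (line p a) (locally 0) (fun t => scal t a).
Proof.
  apply filterdiff_ext with (f := fun t : R => plus (p : prod_NormedModule R_AbsRing R_NormedModule R_NormedModule) (scal t a)).
  - intros t; unfold line; destruct p, a; reflexivity.
  - eapply filterdiff_ext_lin. apply filterdiff_plus_fct. apply filterdiff_const.
    apply filterdiff_linear. exact (is_linear_scal_l (K:=R_AbsRing) a). intros; simpl. apply plus_zero_l.
Qed.

Lemma line0 p a : line p a 0 = p.
Proof. unfold line; destruct p; simpl; f_equal; ring. Qed.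

Lemma dir_ex (f : R * R -> R) p a : ex_filterdiff f (locally p) -> exists l, dir_deriv f p a l.
Proof.
  intros [lf Hf].
  assert (H : ex_derive (fun t => f (line p a t)) 0).
  { apply ex_derive_filterdiff.
    pose proof (filterdiff_comp' (line p a) f 0 _ lf (line_fd p a)) as H.
    rewrite line0 in H. specialize (H Hf). eexists. exact H. }
  destruct H as [l Hl]. exists l. exact Hl.
Qed.

Lemma open_line (U : R * R -> Prop) p a : open U -> U p -> locally 0 (fun t => U (line p a t)).
Proof.
  intros HU Hp.
  pose proof (filterdiff_continuous (K:=R_AbsRing) (U:=AbsRing_NormedModule R_AbsRing)
     (V:=prod_NormedModule R_AbsRing R_NormedModule R_NormedModule) (line p a) 0) as Hc.
  assert (Hex : ex_filterdiff (line p a) (locally 0)) by (eexists; apply line_fd).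
  specialize (Hc Hex). apply Hc. rewrite line0. apply HU. exact Hp.
Qed.

Open Scope R_scope.
Open Scope C_scope.

Definition dz (a : R * R) : C := ((fst a / 2)%R, (- snd a / 2)%R).

Lemma dz_xi mu0 mu1 mu2 p : dz (gckv mu0 mu1 mu2 p) = gckv_coef mu0 mu1 mu2 (zc p).
Proof. unfold dz, gckv. destruct (gckv_coef mu0 mu1 mu2 (zc p)) as [x y]. unfold Re, Im; simpl. f_equal; field. Qed.

Lemma mob_cd (al be ga de : C) p a : ga * zc p + de <> RtoC 0 ->
  cd (fun t => (al * zc (line p a t) + be) / (ga * zc (line p a t) + de)) 0
     ((al * de - be * ga) * dz a / (ga * zc p + de) ^ 2).
Proof.
  intros Hn.
  assert (L := cd_line p a 0).
  assert (E : zc (line p a 0) = zc p) by (rewrite line0; reflexivity).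
  eapply cd_eq. apply cd_div.
  - apply cd_plus. apply cd_cmul. exact L. apply cd_const.
  - apply cd_plus. apply cd_cmul. exact L. apply cd_const.
  - rewrite E. exact Hn.
  - cbv beta. rewrite E. unfold dz. field. exact Hn.
Qed.

Lemma key_i mu0 mu1 mu2 ga de z :
  let al := / RtoC 2 * (de * mu2 - ga * mu1) in
  let be := / RtoC 2 * de * mu1 - ga * mu0 in
  mu0p mu0 mu1 mu2 * (ga * z + de) ^ 2 + (al * z + be) ^ 2
  = (/ RtoC 2 * de ^ 2 * mu2 - ga * de * mu1 + ga ^ 2 * mu0) * gckv_coef mu0 mu1 mu2 z.
Proof. intros. unfold al, be, mu0p, gckv_coef. field. Qed.

Lemma det_i mu0 mu1 mu2 ga de :
  let al := / RtoC 2 * (de * mu2 - ga * mu1) in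
  let be := / RtoC 2 * de * mu1 - ga * mu0 in
  al * de - be * ga = / RtoC 2 * de ^ 2 * mu2 - ga * de * mu1 + ga ^ 2 * mu0.
Proof. intros. unfold al, be. field. Qed.

Lemma cd_cderiv (X : R * R -> R * R) (f : R * R -> C) p l :
  cd (fun t => f (line p (X p) t)) 0 l -> cderiv_along X f p l.
Proof. intros H. exact H. Qed.

Lemma part_i mu0 mu1 mu2 ga de :
  / RtoC 2 * de ^ 2 * mu2 - ga * de * mu1 + ga ^ 2 * mu0 = RtoC 1 ->
  let al := / RtoC 2 * (de * mu2 - ga * mu1) in
  let be := / RtoC 2 * de * mu1 - ga * mu0 in
  let om := fun p : R * R => (al * zc p + be) / (ga * zc p + de) in
  forall p, ga * zc p + de <> RtoC 0 ->
  cderiv_along (gckv mu0 mu1 mu2) om p (mu0p mu0 mu1 mu2 + om p ^ 2).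
Proof.
  intros HS al be om p Hn. apply cd_cderiv.
  eapply cd_eq. apply (mob_cd al be ga de p (gckv mu0 mu1 mu2 p) Hn).
  rewrite dz_xi. unfold al, be. rewrite det_i, HS.
  pose proof (key_i mu0 mu1 mu2 ga de (zc p)) as K. cbv zeta in K. rewrite HS in K.
  rewrite <- K. unfold om, al, be. field. exact Hn.
Qed.

Open Scope R_scope.
Open Scope R_scope.

Lemma poly4R (c0 c1 c2 c3 c4 : R) :
  (forall t : R, c0 + c1 * t + c2 * t ^ 2 + c3 * t ^ 3 + c4 * t ^ 4 = 0) ->
  c0 = 0 /\ c1 = 0 /\ c2 = 0 /\ c3 = 0 /\ c4 = 0.
Proof.
  intros H.
  pose proof (H 0) as H0. pose proof (H 1) as H1. pose proof (H 2) as H2.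
  pose proof (H 3) as H3. pose proof (H 4) as H4.
  simpl in *. ring_simplify in H0. ring_simplify in H1. ring_simplify in H2.
  ring_simplify in H3. ring_simplify in H4.
  repeat split; lra.
Qed.

Open Scope C_scope.
Lemma poly4C (c0 c1 c2 c3 c4 : C) :
  (forall t : R, c0 + c1 * RtoC t + c2 * RtoC t ^ 2 + c3 * RtoC t ^ 3 + c4 * RtoC t ^ 4 = RtoC 0) ->
  c0 = 0 /\ c1 = 0 /\ c2 = 0 /\ c3 = 0 /\ c4 = 0.
Proof.
  intros H. destruct c0 as [a0 b0], c1 as [a1 b1], c2 as [a2 b2], c3 as [a3 b3], c4 as [a4 b4].
  assert (HR : forall t : R, (a0 + a1 * t + a2 * t ^ 2 + a3 * t ^ 3 + a4 * t ^ 4)%R = 0%R).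
  { intros t. specialize (H t). apply (f_equal fst) in H. simpl in H. rewrite <- H. ring. }
  assert (HI : forall t : R, (b0 + b1 * t + b2 * t ^ 2 + b3 * t ^ 3 + b4 * t ^ 4)%R = 0%R).
  { intros t. specialize (H t). apply (f_equal snd) in H. simpl in H. rewrite <- H. ring. }
  apply poly4R in HR. apply poly4R in HI.
  destruct HR as (-> & -> & -> & -> & ->), HI as (-> & -> & -> & -> & ->). repeat split.
Qed.

Lemma polymul_zero (r0 r1 r2 e0 e1 e2 : C) :
  e0 <> RtoC 0 ->
  (forall t : R, (r0 + r1 * RtoC t + r2 * RtoC t ^ 2) * (e0 + e1 * RtoC t + e2 * RtoC t ^ 2) = RtoC 0) ->
  r0 = 0 /\ r1 = 0 /\ r2 = 0.
Proof.
  intros He H.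
  assert (H' : forall t : R, r0 * e0 + (r0 * e1 + r1 * e0) * RtoC t + (r0 * e2 + r1 * e1 + r2 * e0) * RtoC t ^ 2
     + (r1 * e2 + r2 * e1) * RtoC t ^ 3 + (r2 * e2) * RtoC t ^ 4 = RtoC 0).
  { intros t. rewrite <- (H t). ring. }
  apply poly4C in H'. destruct H' as (A0 & A1 & A2 & _ & _).
  assert (Z0 : r0 = 0). { apply (Cmult_neq_0 r0 e0) || idtac.
    destruct (Ceq_dec r0 0) as [|n]; auto. exfalso. apply (Cmult_neq_0 r0 e0 n He). exact A0. }
  subst r0.
  assert (Z1 : r1 = 0). { destruct (Ceq_dec r1 0) as [|n]; auto. exfalso. apply (Cmult_neq_0 r1 e0 n He).
    rewrite <- A1. ring. }
  subst r1.
  assert (Z2 : r2 = 0). { destruct (Ceq_dec r2 0) as [|n]; auto. exfalso. apply (Cmult_neq_0 r2 e0 n He).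
    rewrite <- A2. ring. }
  subst. repeat split.
Qed.

Lemma Csqrt_ex (w : C) : exists s : C, s * s = w.
Proof.
  destruct w as [x y].
  set (r := sqrt (x ^ 2 + y ^ 2)).
  assert (Hr : (r * r = x ^ 2 + y ^ 2)%R) by (unfold r; apply sqrt_sqrt; nra).
  assert (Hr0 : (0 <= r)%R) by apply sqrt_pos.
  assert (A1 : (0 <= (r + x) / 2)%R).
  { destruct (Rle_dec 0 (r + x)); [lra|]. exfalso. nra. }
  assert (A2 : (0 <= (r - x) / 2)%R).
  { destruct (Rle_dec 0 (r - x)); [lra|]. exfalso. nra. }
  set (s1 := sqrt ((r + x) / 2)). set (s2 := sqrt ((r - x) / 2)).
  assert (S1 : (s1 * s1 = (r + x) / 2)%R) by (apply sqrt_sqrt; exact A1).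
  assert (S2 : (s2 * s2 = (r - x) / 2)%R) by (apply sqrt_sqrt; exact A2).
  assert (P12 : ((s1 * s2) * (s1 * s2) = y * y / 4)%R).
  { replace ((s1 * s2) * (s1 * s2))%R with ((s1 * s1) * (s2 * s2))%R by ring. rewrite S1, S2.
    field_simplify. replace (r ^ 2)%R with (r * r)%R by ring. rewrite Hr. field. }
  assert (Hp : (0 <= s1 * s2)%R) by (apply Rmult_le_pos; apply sqrt_pos).
  destruct (Rle_dec 0 y) as [Hy|Hy].
  - exists (s1, s2). unfold Cmult; simpl. f_equal.
    + rewrite S1, S2. field.
    + assert (s1 * s2 = y / 2)%R by nra. nra.
  - exists (s1, (- s2)%R). unfold Cmult; simpl. f_equal.
    + replace (s1 * s1 - - s2 * - s2)%R with (s1 * s1 - s2 * s2)%R by ring. rewrite S1, S2. field.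
    + assert (s1 * s2 = - y / 2)%R by nra. nra.
Qed.

Open Scope R_scope.
Open Scope C_scope.

Lemma Cneq_mult (x y : C) : x <> 0 -> y <> 0 -> x * y <> 0.
Proof. intros Hx Hy. apply Cmult_neq_0; auto. Qed.

Lemma mob_alg (a b c d c0 m : C) :
  a * d - b * c <> 0 ->
  a ^ 2 + c0 * c ^ 2 = a * d - b * c ->
  a * b + c0 * c * d = 0 ->
  b ^ 2 + c0 * d ^ 2 = (a * d - b * c) * m ->
  a = d /\ b = - (m * c) /\ a ^ 2 + m * c ^ 2 = a * d - b * c.
Proof.
  intros Hdet E2 E1 E0.
  set (D := a * d - b * c) in *.
  assert (Had : a = d).
  { assert (H1 : (a - d) * D = - c * (a * b + c0 * c * d) + d * (a ^ 2 + c0 * c ^ 2 - D)) by (unfold D; ring).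
    rewrite E1, E2 in H1.
    assert (H : (a - d) * D = 0) by (rewrite H1; ring).
    destruct (Ceq_dec (a - d) 0) as [Z|Z].
    - transitivity (a - d + d). ring. rewrite Z. ring.
    - exfalso. exact (Cmult_neq_0 _ _ Z Hdet H). }
  subst d.
  destruct (Ceq_dec c 0) as [Hc|Hc].
  - subst c.
    assert (Ha : a <> 0). { intro Z. apply Hdet. unfold D. rewrite Z. ring. }
    assert (Hb : b = 0).
    { destruct (Ceq_dec b 0) as [|n]; auto. exfalso. apply (Cmult_neq_0 a b Ha n). rewrite <- E1. ring. }
    subst b. split; [reflexivity|]. split; [ring|]. unfold D; ring.
  - assert (Hb : b = - (c0 * c)).
    { assert (H : c * (b + c0 * c) = 0).
      { assert (H1 : c * (b + c0 * c) = a ^ 2 + c0 * c ^ 2 - D) by (unfold D; ring).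
        rewrite E2 in H1. rewrite H1. ring. }
      destruct (Ceq_dec (b + c0 * c) 0) as [Z|Z].
      - transitivity (b + c0 * c - c0 * c). ring. rewrite Z. ring.
      - exfalso. exact (Cmult_neq_0 _ _ Hc Z H). }
    assert (Hm : c0 = m).
    { assert (H : D * (c0 - m) = 0).
      { assert (H1 : D * (c0 - m) = c0 * (D - (a ^ 2 + c0 * c ^ 2)) - (D * m - (b ^ 2 + c0 * a ^ 2))
           + (c0 * c0 * c ^ 2 - b ^ 2)) by ring.
        rewrite E2, E0, Hb in H1. rewrite H1. ring. }
      destruct (Ceq_dec (c0 - m) 0) as [Z|Z].
      - transitivity (c0 - m + m). ring. rewrite Z. ring.
      - exfalso. exact (Cmult_neq_0 _ _ Hdet Z H). }
    subst c0. split; [reflexivity|]. split; [exact Hb|]. exact E2.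
Qed.

Lemma zc_shift p0 (t : R) : zc ((fst p0 + t)%R, snd p0) = zc p0 + RtoC t * RtoC (/2).
Proof. unfold zc, Cplus, Cmult, RtoC; simpl. f_equal; field. Qed.

Lemma part_ii mu0 mu1 mu2 gam del :
  / RtoC 2 * del ^ 2 * mu2 - gam * del * mu1 + gam ^ 2 * mu0 = RtoC 1 ->
  let alp := / RtoC 2 * (del * mu2 - gam * mu1) in
  let bet := / RtoC 2 * del * mu1 - gam * mu0 in
  let xi := gckv mu0 mu1 mu2 in
  let m0' := mu0p mu0 mu1 mu2 in
  let om := fun p : R * R => (alp * zc p + bet) / (gam * zc p + del) in
  (forall a b c d : C, a * d - b * c <> RtoC 0 ->
     let om' := fun p : R * R => (a * om p + b) / (c * om p + d) in
     let dom := fun p : R * R => gam * zc p + del <> RtoC 0 /\ c * om p + d <> RtoC 0 in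
     (exists c0 : C, forall p : R * R, dom p -> cderiv_along xi om' p (c0 + om' p ^ 2)) ->
     exists gam' del' : C,
       del' ^ 2 + m0' * gam' ^ 2 = RtoC 1 /\
       forall p : R * R, dom p ->
         gam' * om p + del' <> RtoC 0 /\
         om' p = (del' * om p - gam' * m0') / (gam' * om p + del')).
Proof.
  intros HS alp bet xi m0' om a b c d Hdet om' dom [c0 Hc0].
  set (q2 := a * d - b * c - c0 * c ^ 2 - a ^ 2).
  set (q1 := - (RtoC 2 * (c0 * c * d + a * b))).
  set (q0 := (a * d - b * c) * m0' - c0 * d ^ 2 - b ^ 2).
  assert (K : forall p, dom p -> q2 * om p ^ 2 + q1 * om p + q0 = 0).
  { intros p [Hn Hl].
    pose proof (part_i mu0 mu1 mu2 gam del HS p Hn) as Ci.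
    change (cd (fun t => om (line p (xi p) t)) 0 (m0' + om p ^ 2)) in Ci.
    assert (C2 : cd (fun t => om' (line p (xi p) t)) 0
       (((a * (m0' + om p ^ 2) + 0) * (c * om p + d) - (a * om p + b) * (c * (m0' + om p ^ 2) + 0)) / (c * om p + d) ^ 2)).
    { eapply cd_eq. apply cd_div.
      - apply cd_plus. apply cd_cmul. exact Ci. apply cd_const.
      - apply cd_plus. apply cd_cmul. exact Ci. apply cd_const.
      - cbv beta. rewrite line0. exact Hl.
      - cbv beta. rewrite line0. reflexivity. }
    pose proof (Hc0 p (conj Hn Hl)) as C3.
    change (cd (fun t => om' (line p (xi p) t)) 0 (c0 + om' p ^ 2)) in C3.
    pose proof (cd_unique _ _ _ _ C2 C3) as Eq.
    unfold om' in Eq.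
    set (w := om p) in *.
    transitivity ((c * w + d) ^ 2 * ((((a * (m0' + w ^ 2) + 0) * (c * w + d) - (a * w + b) * (c * (m0' + w ^ 2) + 0)) / (c * w + d) ^ 2) - (c0 + ((a * w + b) / (c * w + d)) ^ 2))).
    - unfold q2, q1, q0. field. exact Hl.
    - rewrite Eq. ring. }
  destruct (classic (exists p0, dom p0)) as [[p0 Hp0]|Hno].
  2: { exists 0, 1. split. ring. intros p Hp. exfalso. apply Hno. exists p. exact Hp. }
  destruct Hp0 as [Hn0 Hl0].
  set (z0 := zc p0) in *.
  set (N0 := alp * z0 + bet). set (P0 := gam * z0 + del).
  set (v1 := alp * RtoC (/2)). set (v2 := gam * RtoC (/2)).
  set (L0 := c * N0 + d * P0). set (l1 := c * v1 + d * v2).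
  set (E0 := q2 * N0 ^ 2 + q1 * N0 * P0 + q0 * P0 ^ 2).
  set (E1 := RtoC 2 * q2 * N0 * v1 + q1 * (N0 * v2 + P0 * v1) + RtoC 2 * q0 * P0 * v2).
  set (E2 := q2 * v1 ^ 2 + q1 * v1 * v2 + q0 * v2 ^ 2).
  assert (HP : forall t : R, (E0 + E1 * RtoC t + E2 * RtoC t ^ 2) *
      (P0 * L0 + (P0 * l1 + v2 * L0) * RtoC t + v2 * l1 * RtoC t ^ 2) = 0).
  { intros t.
    set (Nt := N0 + RtoC t * v1). set (Pt := P0 + RtoC t * v2). set (Lt := c * Nt + d * Pt).
    transitivity ((q2 * Nt ^ 2 + q1 * Nt * Pt + q0 * Pt ^ 2) * (Pt * Lt)).
    { unfold Lt, Nt, Pt, E0, E1, E2, L0, l1. ring. }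
    destruct (Ceq_dec Pt 0) as [Z|HPt]. { rewrite Z. ring. }
    destruct (Ceq_dec Lt 0) as [Z|HLt]. { rewrite Z. ring. }
    set (pt := ((fst p0 + t)%R, snd p0)).
    assert (Ez : gam * zc pt + del = Pt).
    { unfold pt. rewrite zc_shift. fold z0. unfold Pt, P0, v2. ring. }
    assert (Ew : om pt = Nt / Pt).
    { unfold om. rewrite Ez. f_equal. unfold pt. rewrite zc_shift. fold z0. unfold Nt, N0, v1. ring. }
    assert (Hd : dom pt).
    { split. rewrite Ez. exact HPt. rewrite Ew. intro Z. apply HLt.
      transitivity (Pt * (c * (Nt / Pt) + d)). unfold Lt. field. exact HPt. rewrite Z. ring. }
    pose proof (K pt Hd) as Kt. rewrite Ew in Kt.
    transitivity (Pt ^ 3 * (q2 * (Nt / Pt) ^ 2 + q1 * (Nt / Pt) + q0) * Lt).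
    field. exact HPt. rewrite Kt. ring. }
  assert (He0 : P0 * L0 <> 0).
  { apply Cneq_mult. exact Hn0. intro Z. apply Hl0.
    transitivity (L0 / P0). unfold L0, om. fold z0 N0 P0. field. exact Hn0. rewrite Z. field. exact Hn0. }
  destruct (polymul_zero _ _ _ _ _ _ He0 HP) as (Z0 & Z1 & Z2).
  set (Dl := N0 * v2 - P0 * v1).
  assert (HDl : Dl <> 0).
  { assert (Dl = - (alp * del - bet * gam) * RtoC (/2)) as ->.
    { unfold Dl, N0, P0, v1, v2. ring. }
    unfold alp, bet. rewrite det_i, HS. intro Z. injection Z. lra. }
  assert (Q2 : q2 = 0).
  { assert (H : q2 * Dl ^ 2 = v2 ^ 2 * E0 - v2 * P0 * E1 + P0 ^ 2 * E2) by (unfold E0, E1, E2, Dl; ring).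
    rewrite Z0, Z1, Z2 in H.
    destruct (Ceq_dec q2 0) as [|n]; auto. exfalso.
    apply (Cmult_neq_0 q2 (Dl ^ 2) n). apply Cpow_nz; exact HDl. rewrite H. ring. }
  assert (Q0 : q0 = 0).
  { assert (H : q0 * Dl ^ 2 = v1 ^ 2 * E0 - v1 * N0 * E1 + N0 ^ 2 * E2) by (unfold E0, E1, E2, Dl; ring).
    rewrite Z0, Z1, Z2 in H.
    destruct (Ceq_dec q0 0) as [|n]; auto. exfalso.
    apply (Cmult_neq_0 q0 (Dl ^ 2) n). apply Cpow_nz; exact HDl. rewrite H. ring. }
  assert (Q1 : q1 = 0).
  { assert (H : (q2 + q1 + q0) * Dl ^ 2 = (v2 - v1) ^ 2 * E0 + (v2 - v1) * (N0 - P0) * E1 + (N0 - P0) ^ 2 * E2)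
      by (unfold E0, E1, E2, Dl; ring).
    rewrite Z0, Z1, Z2, Q2, Q0 in H.
    destruct (Ceq_dec q1 0) as [|n]; auto. exfalso.
    apply (Cmult_neq_0 q1 (Dl ^ 2) n). apply Cpow_nz; exact HDl. transitivity ((0 + q1 + 0) * Dl ^ 2). ring. rewrite H. ring. }
  destruct (mob_alg a b c d c0 m0' Hdet) as (Ead & Eb & Em).
  { transitivity (a * d - b * c - q2). unfold q2; ring. rewrite Q2; ring. }
  { transitivity (- q1 / RtoC 2). unfold q1. field. rewrite Q1. field. }
  { transitivity ((a * d - b * c) * m0' - q0). unfold q0; ring. rewrite Q0; ring. }
  destruct (Csqrt_ex (a * d - b * c)) as [lam Hlam].
  assert (Hl : lam <> 0). { intro Z. apply Hdet. rewrite <- Hlam, Z. ring. }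
  exists (c / lam), (a / lam). split.
  { transitivity ((a ^ 2 + m0' * c ^ 2) / (lam * lam)). field. exact Hl.
    rewrite Em, Hlam. field. exact Hdet. }
  intros p [Hn Hlp]. split.
  - intro Z. apply Hlp. transitivity (lam * (c / lam * om p + a / lam)).
    rewrite Ead. field. exact Hl. rewrite Z. ring.
  - unfold om'. rewrite Eb, <- Ead. field. split. exact Hl.
    rewrite Ead. exact Hlp.
Qed.

Open Scope R_scope.
Open Scope C_scope.

Lemma chain (om : R * R -> C) (zeta : R * R -> C) (Wf Wdf : C -> C) (U : R * R -> Prop) p a (d1 d2 : R) N :
  open U -> U p -> (forall q, U q -> om q = Wf (zeta q)) ->
  cd (fun t => om (line p a t)) 0 N ->
  (forall h l, cd h 0 l -> h 0%R = zeta p -> cd (fun s => Wf (h s)) 0 (Wdf (zeta p) * l)) ->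
  dir_deriv (fun q => (2 * Re (zeta q))%R) p a d1 ->
  dir_deriv (fun q => (2 * Im (zeta q))%R) p a d2 ->
  Wdf (zeta p) * ((d1 / 2)%R, (d2 / 2)%R) = N.
Proof.
  intros HU Hp Hom HN HW H1 H2.
  set (h := fun t => zeta (line p a t)).
  assert (Hh : cd h 0 ((d1 / 2)%R, (d2 / 2)%R)).
  { split; simpl.
    - eapply is_derive_ext; [| eapply Rd_eq; [apply (is_derive_scal _ _ (/2)%R _ H1)|unfold Rdiv; ring]].
      intros t; simpl. unfold h, line. field.
    - eapply is_derive_ext; [| eapply Rd_eq; [apply (is_derive_scal _ _ (/2)%R _ H2)|unfold Rdiv; ring]].
      intros t; simpl. unfold h, line. field. }
  assert (Hh0 : h 0%R = zeta p) by (unfold h; rewrite line0; reflexivity).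
  pose proof (HW h _ Hh Hh0) as C1.
  assert (C2 : cd (fun t => om (line p a t)) 0 (Wdf (zeta p) * ((d1 / 2)%R, (d2 / 2)%R))).
  { eapply cd_ext_loc; [|exact C1].
    eapply filter_imp; [|exact (open_line U p a HU Hp)].
    intros t Ht. simpl. unfold h. symmetry. apply Hom. exact Ht. }
  exact (cd_unique _ _ _ _ C2 HN).
Qed.

Definition kk (Q th : R) : C := RtoC (sqrt Q) * cexp ((0%R, (- th)%R)).
Definition ee (Q th : R) (z : C) : C := cexp (RtoC 2 * Ci * kk Q th * z).
Definition Wp (Q th : R) (z : C) : C :=
  Ci * kk Q th / RtoC 2 * ((RtoC 1 + ee Q th z) / (RtoC 1 - ee Q th z)).
Definition Wpd (Q th : R) (z : C) : C :=
  - (RtoC 2 * kk Q th ^ 2 * ee Q th z) / (RtoC 1 - ee Q th z) ^ 2.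
Definition W0 (z : C) : C := - / (RtoC 2 * z).
Definition W0d (z : C) : C := / (RtoC 2 * z ^ 2).

Lemma Ci2 : Ci * Ci = - RtoC 1.
Proof. unfold Ci, Cmult, RtoC, Copp; simpl. f_equal; ring. Qed.

Lemma om_pos Q th z : (0 < Q)%R -> omega_of_zeta Q th z = Wp Q th z.
Proof. intros H. unfold omega_of_zeta. destruct (Rle_dec Q 0); [lra|reflexivity]. Qed.
Lemma om_zero Q th z : (Q <= 0)%R -> omega_of_zeta Q th z = W0 z.
Proof. intros H. unfold omega_of_zeta. destruct (Rle_dec Q 0); [reflexivity|lra]. Qed.
Lemma def_pos Q th z : (0 < Q)%R -> omega_of_zeta_defined Q th z -> RtoC 1 - ee Q th z <> 0.
Proof. intros H. unfold omega_of_zeta_defined. destruct (Rle_dec Q 0); [lra|]. auto. Qed.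
Lemma def_zero Q th z : (Q <= 0)%R -> omega_of_zeta_defined Q th z -> z <> 0.
Proof. intros H. unfold omega_of_zeta_defined. destruct (Rle_dec Q 0); [|lra]. auto. Qed.

Lemma cd_Wp Q th h l : cd h 0 l -> RtoC 1 - ee Q th (h 0%R) <> 0 ->
  cd (fun s => Wp Q th (h s)) 0 (Wpd Q th (h 0%R) * l).
Proof.
  intros Hh Hn.
  assert (He : cd (fun s => ee Q th (h s)) 0 (ee Q th (h 0%R) * (RtoC 2 * Ci * kk Q th * l))).
  { apply cd_cexp. apply cd_cmul. exact Hh. }
  unfold Wp. eapply cd_eq. apply cd_cmul. apply cd_div.
  apply cd_plus. apply cd_const. exact He.
  apply cd_minus. apply cd_const. exact He. exact Hn.
  cbv beta. unfold Wpd.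
  transitivity ((Ci * Ci) * (RtoC 2 * kk Q th ^ 2 * ee Q th (h 0%R) * l) / (RtoC 1 - ee Q th (h 0%R)) ^ 2).
  field. exact Hn. rewrite Ci2. field. exact Hn.
Qed.

Lemma cd_W0 h l : cd h 0 l -> h 0%R <> 0 ->
  cd (fun s => W0 (h s)) 0 (W0d (h 0%R) * l).
Proof.
  intros Hh Hn. unfold W0. eapply cd_eq. apply cd_opp. apply cd_inv. apply cd_cmul. exact Hh.
  cbv beta. intro Z. apply Hn. transitivity (/ RtoC 2 * (RtoC 2 * h 0%R)). field. rewrite Z. ring.
  cbv beta. unfold W0d. field. exact Hn.
Qed.

Lemma Cdiv_neq0 (x y : C) : x <> 0 -> y <> 0 -> x / y <> 0.
Proof.
  intros Hx Hy Z. apply Hx. transitivity (x / y * y). field. exact Hy. rewrite Z. ring.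
Qed.

Lemma D_eq (w : C) (d1 d2 : R) (v : C) : w <> 0 -> w * ((d1 / 2)%R, (d2 / 2)%R) = w * v ->
  d1 = (2 * Re v)%R /\ d2 = (2 * Im v)%R.
Proof.
  intros Hw E.
  set (Dv := ((d1 / 2)%R, (d2 / 2)%R) : C) in *.
  assert (E2 : Dv = v).
  { transitivity (/ w * (w * Dv)). field. exact Hw. rewrite E. field. exact Hw. }
  rewrite <- E2. unfold Dv, Re, Im; simpl. split; field.
Qed.

Lemma gckv_coef_i mu0 mu1 mu2 z :
  gckv_coef (Ci * mu0) (Ci * mu1) (Ci * mu2) z = Ci * gckv_coef mu0 mu1 mu2 z.
Proof. unfold gckv_coef. field. Qed.

Lemma part_iii_gen mu0 mu1 mu2 gam del (Wf Wdf : C -> C) (U : R * R -> Prop) (zeta : R * R -> C) p :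
  / RtoC 2 * del ^ 2 * mu2 - gam * del * mu1 + gam ^ 2 * mu0 = RtoC 1 ->
  let alp := / RtoC 2 * (del * mu2 - gam * mu1) in
  let bet := / RtoC 2 * del * mu1 - gam * mu0 in
  let xi := gckv mu0 mu1 mu2 in
  let m0' := mu0p mu0 mu1 mu2 in
  let om := fun p : R * R => (alp * zc p + bet) / (gam * zc p + del) in
  let v1 := fun q : R * R => (2 * Re (zeta q))%R in
  let v2 := fun q : R * R => (2 * Im (zeta q))%R in
  open U -> U p -> gam * zc p + del <> RtoC 0 ->
  ex_filterdiff v1 (locally p) -> ex_filterdiff v2 (locally p) ->
  (forall q, U q -> om q = Wf (zeta q)) ->
  (forall h l, cd h 0 l -> h 0%R = zeta p -> cd (fun s => Wf (h s)) 0 (Wdf (zeta p) * l)) ->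
  RtoC 2 * (m0' + Wf (zeta p) ^ 2) = Wdf (zeta p) -> Wdf (zeta p) <> 0 ->
  deriv_along xi v1 p 1 /\ deriv_along xi v2 p 0 /\
  deriv_along (gckv (Ci * mu0) (Ci * mu1) (Ci * mu2)) v1 p 0 /\
  deriv_along (gckv (Ci * mu0) (Ci * mu1) (Ci * mu2)) v2 p 1.
Proof.
  intros HS alp bet xi m0' om v1 v2 HU Hp Hn F1 F2 Hom HW Halg Hnz.
  assert (Hom_p : om p = Wf (zeta p)) by (apply Hom; exact Hp).
  destruct (dir_ex v1 p (xi p) F1) as [d1 H1].
  destruct (dir_ex v2 p (xi p) F2) as [d2 H2].
  pose proof (part_i mu0 mu1 mu2 gam del HS p Hn) as Ci1.
  change (cd (fun t => om (line p (xi p) t)) 0 (m0' + om p ^ 2)) in Ci1.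
  pose proof (chain om zeta Wf Wdf U p (xi p) d1 d2 _ HU Hp Hom Ci1 HW H1 H2) as E1.
  destruct (D_eq (Wdf (zeta p)) d1 d2 (/ RtoC 2) Hnz) as [Ed1 Ed2].
  { rewrite E1, Hom_p, <- Halg. field. }
  simpl in Ed1, Ed2. unfold Re, Im in Ed1, Ed2; simpl in Ed1, Ed2.
  set (xp := gckv (Ci * mu0) (Ci * mu1) (Ci * mu2)).
  destruct (dir_ex v1 p (xp p) F1) as [e1 G1].
  destruct (dir_ex v2 p (xp p) F2) as [e2 G2].
  pose proof (mob_cd alp bet gam del p (xp p) Hn) as Cp.
  pose proof (chain om zeta Wf Wdf U p (xp p) e1 e2 _ HU Hp Hom Cp HW G1 G2) as E2.
  destruct (D_eq (Wdf (zeta p)) e1 e2 (Ci * / RtoC 2) Hnz) as [Ee1 Ee2].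
  { rewrite E2. unfold xp. rewrite dz_xi, gckv_coef_i. unfold alp, bet. rewrite det_i, HS.
    pose proof (key_i mu0 mu1 mu2 gam del (zc p)) as K. cbv zeta in K. rewrite HS in K.
    rewrite <- Halg, <- Hom_p. unfold om. fold alp bet in K |- *.
    transitivity (Ci * ((RtoC 1 * gckv_coef mu0 mu1 mu2 (zc p))) / (gam * zc p + del) ^ 2).
    cbv beta. field. exact Hn. rewrite <- K. unfold m0'. field. exact Hn. }
  unfold Re, Im, Ci in Ee1, Ee2; simpl in Ee1, Ee2.
  split; [|split; [|split]].
  - replace 1%R with d1 by (rewrite Ed1; field). exact H1.
  - replace 0%R with d2 by (rewrite Ed2; field). exact H2.
  - replace 0%R with e1 by (rewrite Ee1; field). exact G1.
  - replace 1%R with e2 by (rewrite Ee2; field). exact G2.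
Qed.

Open Scope R_scope.
Open Scope C_scope.

Definition Hf (A B C' Dd w : C) : C := A * w * Cconj w + B * w + C' * Cconj w + Dd.
Definition Hu (u0 u1 u2 u3 : R) (x y : C) : C :=
  (RtoC u0 - RtoC u1) * x * Cconj x + (RtoC u2 + Ci * RtoC u3) * x * Cconj y
  + (RtoC u2 - Ci * RtoC u3) * Cconj x * y + (RtoC u0 + RtoC u1) * y * Cconj y.


Lemma u3i (a b g d : C) (u0 u1 u2 u3 : R) : Ci * (uprime a b g d u0 u1 u2 u3 3%nat) = / RtoC 2 * (
   - (- (a*(Cconj g)) - b*(Cconj d) + g*(Cconj a) + d*(Cconj b)) * (RtoC u0) - (- (a*(Cconj g)) + b*(Cconj d) + g*(Cconj a) - d*(Cconj b)) * (RtoC u1)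
   - (a*(Cconj d) + b*(Cconj g) - g*(Cconj b) - d*(Cconj a)) * (RtoC u2) + Ci * (a*(Cconj d) - b*(Cconj g) - g*(Cconj b) + d*(Cconj a)) * (RtoC u3)).
Proof.
  unfold uprime, Nmat.
  transitivity (/ RtoC 2 * ((Ci * Ci) * (- (a*(Cconj g)) - b*(Cconj d) + g*(Cconj a) + d*(Cconj b)) * (RtoC u0) + (Ci * Ci) * (- (a*(Cconj g)) + b*(Cconj d) + g*(Cconj a) - d*(Cconj b)) * (RtoC u1)
   + (Ci * Ci) * (a*(Cconj d) + b*(Cconj g) - g*(Cconj b) - d*(Cconj a)) * (RtoC u2) + Ci * (a*(Cconj d) - b*(Cconj g) - g*(Cconj b) + d*(Cconj a)) * (RtoC u3))).
  ring. rewrite Ci2. ring.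
Qed.

Lemma coefA (a b g d : C) (u0 u1 u2 u3 : R) : (uprime a b g d u0 u1 u2 u3 0%nat) - (uprime a b g d u0 u1 u2 u3 1%nat) =
  ((RtoC u0) - (RtoC u1)) * d * (Cconj d) - ((RtoC u2) + Ci * (RtoC u3)) * d * (Cconj g) - ((RtoC u2) - Ci * (RtoC u3)) * (Cconj d) * g + ((RtoC u0) + (RtoC u1)) * g * (Cconj g).
Proof. unfold uprime, Nmat. field. Qed.

Lemma coefD (a b g d : C) (u0 u1 u2 u3 : R) : (uprime a b g d u0 u1 u2 u3 0%nat) + (uprime a b g d u0 u1 u2 u3 1%nat) =
  ((RtoC u0) - (RtoC u1)) * b * (Cconj b) - ((RtoC u2) + Ci * (RtoC u3)) * b * (Cconj a) - ((RtoC u2) - Ci * (RtoC u3)) * (Cconj b) * a + ((RtoC u0) + (RtoC u1)) * a * (Cconj a).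
Proof. unfold uprime, Nmat. field. Qed.

Lemma coefB (a b g d : C) (u0 u1 u2 u3 : R) : (uprime a b g d u0 u1 u2 u3 2%nat) + Ci * (uprime a b g d u0 u1 u2 u3 3%nat) =
  - ((RtoC u0) - (RtoC u1)) * d * (Cconj b) + ((RtoC u2) + Ci * (RtoC u3)) * d * (Cconj a) + ((RtoC u2) - Ci * (RtoC u3)) * (Cconj b) * g - ((RtoC u0) + (RtoC u1)) * g * (Cconj a).
Proof. rewrite (u3i a b g d u0 u1 u2 u3). unfold uprime, Nmat. field. Qed.

Lemma coefC (a b g d : C) (u0 u1 u2 u3 : R) : (uprime a b g d u0 u1 u2 u3 2%nat) - Ci * (uprime a b g d u0 u1 u2 u3 3%nat) =
  - ((RtoC u0) - (RtoC u1)) * b * (Cconj d) + ((RtoC u2) + Ci * (RtoC u3)) * b * (Cconj g) + ((RtoC u2) - Ci * (RtoC u3)) * (Cconj d) * a - ((RtoC u0) + (RtoC u1)) * a * (Cconj g).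
Proof. unfold Cminus. rewrite <- Copp_mult_distr_l || idtac.
  replace (- (Ci * (uprime a b g d u0 u1 u2 u3 3%nat))) with (- (Ci * (uprime a b g d u0 u1 u2 u3 3%nat))) by reflexivity.
  rewrite (u3i a b g d u0 u1 u2 u3). unfold uprime, Nmat. field. Qed.



Lemma stepA1 (a b g d : C) (u0 u1 u2 u3 : R) (w : C) :
  let u' := uprime a b g d u0 u1 u2 u3 in
  Hf (u' 0%nat - u' 1%nat) (u' 2%nat + Ci * u' 3%nat) (u' 2%nat - Ci * u' 3%nat) (u' 0%nat + u' 1%nat) w
  = Hu u0 u1 u2 u3 (d * w - b) (- g * w + a).
Proof.
  intros u'. unfold Hf, u'. rewrite coefA, coefB, coefC, coefD. unfold Hu.
  rewrite !Cminus_conj, !Cplus_conj, !Cmult_conj, !Copp_conj.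
  generalize (Cconj a) (Cconj b) (Cconj g) (Cconj d) (Cconj w). intros ac bc gc dc wc.
  generalize (RtoC u0) (RtoC u1) (RtoC u2) (RtoC u3). intros x0 x1 x2 x3.
  ring.
Qed.

Lemma conj_neq0 (x : C) : x <> 0 -> Cconj x <> 0.
Proof. intros H Z. apply H. rewrite <- (Cconj_conj x), Z. apply injective_projections; simpl; ring. Qed.

Lemma stepA (a b g d z : C) (u0 u1 u2 u3 : R) :
  a * d - b * g = RtoC 1 -> g * z + d <> 0 ->
  Omega u0 u1 u2 u3 z = (g * z + d) * Cconj (g * z + d) *
     Hu u0 u1 u2 u3 (d * ((a * z + b) / (g * z + d)) - b) (- g * ((a * z + b) / (g * z + d)) + a).
Proof.
  intros Hdet Hn.
  set (P := g * z + d) in *.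
  assert (E1 : d * ((a * z + b) / P) - b = z / P).
  { unfold P. field_simplify_eq. 2: exact Hn.
    transitivity (z * (a * d - b * g)). ring. rewrite Hdet. ring. }
  assert (E2 : - g * ((a * z + b) / P) + a = RtoC 1 / P).
  { unfold P. field_simplify_eq. 2: exact Hn.
    transitivity (a * d - b * g). ring. rewrite Hdet. ring. }
  rewrite E1, E2. unfold Hu, Omega.
  rewrite !Cdiv_conj by exact Hn.
  assert (Hc : Cconj P <> 0) by (apply conj_neq0; exact Hn).
  replace (Cconj (RtoC 1)) with (RtoC 1) by (unfold Cconj, RtoC; simpl; f_equal; ring).
  generalize (Cconj z). intros zc'. 
  field. split; assumption.
Qed.

Lemma final_iv (a : R * R) (d1 d2 : R) (Wd P H G Om den : C) :
  Wd <> 0 -> P <> 0 -> Om <> 0 ->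
  Wd * ((d1 / 2)%R, (d2 / 2)%R) = dz a / P ^ 2 ->
  Om = P * Cconj P * H -> den = H * G -> G * G * (Wd * Cconj Wd) = RtoC 1 ->
  RtoC (fst a ^ 2 + snd a ^ 2)%R / Om ^ 2 = RtoC (d1 ^ 2 + d2 ^ 2)%R / den ^ 2.
Proof.
  intros HW HP HO E HOm Hden HG.
  set (Dv := ((d1 / 2)%R, (d2 / 2)%R) : C) in *.
  assert (E1 : RtoC (d1 ^ 2 + d2 ^ 2)%R = RtoC 4 * Dv * Cconj Dv).
  { unfold Dv, Cconj, Cmult, RtoC; simpl. apply injective_projections; simpl; field. }
  assert (E2 : RtoC (fst a ^ 2 + snd a ^ 2)%R = RtoC 4 * dz a * Cconj (dz a)).
  { unfold dz, Cconj, Cmult, RtoC; simpl. apply injective_projections; simpl; field. }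
  assert (Ec : Cconj Wd * Cconj Dv = Cconj (dz a) / Cconj P ^ 2).
  { rewrite <- Cmult_conj, E, Cdiv_conj, Cpow_conj. reflexivity. apply Cpow_nz; exact HP. }
  assert (HH : H <> 0). { intro Z. apply HO. rewrite HOm, Z. ring. }
  assert (HGn : G <> 0). { intro Z. rewrite Z in HG. apply C1_nz. rewrite <- HG. ring. }
  assert (HPc : Cconj P <> 0) by (apply conj_neq0; exact HP).
  assert (HWc : Cconj Wd <> 0) by (apply conj_neq0; exact HW).
  assert (Ed : dz a = Dv * Wd * P ^ 2).
  { transitivity (dz a / P ^ 2 * P ^ 2). field. exact HP. rewrite <- E. ring. }
  assert (Edc : Cconj (dz a) = Cconj Dv * Cconj Wd * Cconj P ^ 2).
  { transitivity (Cconj (dz a) / Cconj P ^ 2 * Cconj P ^ 2). field. exact HPc. rewrite <- Ec. ring. }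
  rewrite E1, E2, HOm, Hden, Edc, Ed.
  transitivity (RtoC 4 * Dv * Cconj Dv * (G * G * (Wd * Cconj Wd)) / (H * G) ^ 2).
  field. repeat split; assumption.
  rewrite HG. field. split; assumption.
Qed.

Open Scope R_scope.
Open Scope C_scope.

Lemma stepB_pos (A B rho k1 k2 : R) :
  ((1 - A) ^ 2 + B ^ 2 <> 0)%R -> (k1 ^ 2 + k2 ^ 2 <> 0)%R -> rho <> 0%R ->
  let e : C := (A, B) in let k : C := (k1, k2) in
  let W := Ci * k / RtoC 2 * ((RtoC 1 + e) / (RtoC 1 - e)) in
  let G := RtoC (rho * ((1 - A) ^ 2 + B ^ 2) / (2 * (k1 ^ 2 + k2 ^ 2)))%R in
  RtoC (/ 4 * ((rho + (A ^ 2 + B ^ 2) * rho) / 2 + A * rho))%R = W * Cconj W * G /\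
  RtoC (/ (k1 ^ 2 + k2 ^ 2) * ((rho + (A ^ 2 + B ^ 2) * rho) / 2 - A * rho))%R = G /\
  RtoC ((- k2 * ((rho - (A ^ 2 + B ^ 2) * rho) / 2) - k1 * (B * rho)) / (k1 ^ 2 + k2 ^ 2))%R
    = (W + Cconj W) * G /\
  RtoC (- (k1 * ((rho - (A ^ 2 + B ^ 2) * rho) / 2) - k2 * (B * rho)) / (k1 ^ 2 + k2 ^ 2))%R
    = Ci * (W - Cconj W) * G.
Proof.
  intros H1 H2 H3 e k W G.
  assert (H1' : ((1 - A) * ((1 - A) * 1) + (- B) * ((- B) * 1) <> 0)%R) by (intro Z; apply H1; nra).
  assert (H1'' : ((1 - A) * ((1 - A) * 1) + B * (B * 1) <> 0)%R) by (intro Z; apply H1; nra).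
  unfold W, G, e, k, Cconj, Cdiv, Cmult, Cplus, Cminus, Copp, Cinv, RtoC, Ci; simpl.
  repeat split; apply injective_projections; simpl; field; repeat split; auto.
  all: intro Z; first [apply H1; nra | apply H2; nra].
Qed.

Lemma stepB_pos_mod (A B rho k1 k2 : R) :
  ((1 - A) ^ 2 + B ^ 2 <> 0)%R -> (k1 ^ 2 + k2 ^ 2 <> 0)%R ->
  let e : C := (A, B) in let k : C := (k1, k2) in
  let Wd := - (RtoC 2 * k ^ 2 * e) / (RtoC 1 - e) ^ 2 in
  let G := RtoC (rho * ((1 - A) ^ 2 + B ^ 2) / (2 * (k1 ^ 2 + k2 ^ 2)))%R in
  G * G * (Wd * Cconj Wd) = RtoC (rho ^ 2 * (A ^ 2 + B ^ 2))%R.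
Proof.
  intros H1 H2 e k Wd G.
  unfold Wd, G, e, k, Cconj, Cdiv, Cmult, Cplus, Cminus, Copp, Cinv, RtoC, Cpow; simpl.
  apply injective_projections; simpl; field.
  all: repeat split; intro Z; first [apply H1; nra | apply H2; nra].
Qed.

Lemma stepB_zero (z1 z2 : R) : (z1, z2) <> RtoC 0 ->
  let z : C := (z1, z2) in
  let W := - / (RtoC 2 * z) in let Wd := / (RtoC 2 * z ^ 2) in
  let G := RtoC (2 * (z1 ^ 2 + z2 ^ 2))%R in
  RtoC (1 / 2)%R = W * Cconj W * G /\
  RtoC (1 / 2 * ((2 * z1) ^ 2 + (2 * z2) ^ 2))%R = G /\
  RtoC (- (2 * z1))%R = (W + Cconj W) * G /\
  RtoC (- (2 * z2))%R = Ci * (W - Cconj W) * G /\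
  G * G * (Wd * Cconj Wd) = RtoC 1.
Proof.
  intros Hz z W Wd G.
  assert (H1 : (z1 ^ 2 + z2 ^ 2 <> 0)%R).
  { intro Z. apply Hz. assert (z1 = 0%R) by nra. assert (z2 = 0%R) by nra. subst. reflexivity. }
  unfold W, Wd, G, z, Cconj, Cdiv, Cmult, Cplus, Cminus, Copp, Cinv, RtoC, Cpow, Ci; simpl.
  repeat split; apply injective_projections; simpl; field.
  all: repeat split; intro Z; apply H1; nra.
Qed.

Open Scope R_scope.
Open Scope R_scope.

Lemma kk_eq Q th : kk Q th = (sqrt Q * cos th, - (sqrt Q * sin th)).
Proof.
  unfold kk, cexp, RtoC, Cmult; simpl. rewrite exp_0, cos_neg, sin_neg.
  apply injective_projections; simpl; ring.
Qed.

Lemma kk_sq Q th : 0 <= Q -> (kk Q th ^ 2)%C = (RtoC Q * cexp (0%R, (- 2 * th)%R))%C.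
Proof.
  intros HQ. rewrite kk_eq. unfold cexp, RtoC, Cmult, Cpow; simpl.
  replace (- 2 * th) with (- (2 * th)) by ring.
  rewrite exp_0, cos_neg, sin_neg, cos_2a, sin_2a.
  assert (Hs : sqrt Q * sqrt Q = Q) by (apply sqrt_sqrt; exact HQ).
  apply injective_projections; simpl.
  - transitivity ((sqrt Q * sqrt Q) * (cos th * cos th - sin th * sin th)). ring. rewrite Hs. ring.
  - transitivity (- ((sqrt Q * sqrt Q) * (2 * sin th * cos th))). ring. rewrite Hs. ring.
Qed.

Lemma ee_eq Q th (z : C) :
  ee Q th z = cexp ((- (sqrt Q * h2 th (2 * fst z) (2 * snd z)))%R, (sqrt Q * h1 th (2 * fst z) (2 * snd z))%R).
Proof.
  unfold ee. f_equal. rewrite kk_eq. unfold h1, h2, RtoC, Ci, Cmult; simpl.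
  apply injective_projections; simpl; ring.
Qed.

Lemma cexp_neq0 (w : C) : cexp w <> RtoC 0.
Proof.
  unfold cexp, RtoC. intro Z. injection Z as Z1 Z2.
  pose proof (exp_pos (Re w)). pose proof (sin2_cos2 (Im w)). unfold Rsqr in *.
  apply Rmult_integral in Z1, Z2. destruct Z1 as [Z1|Z1]; [lra|]. destruct Z2 as [Z2|Z2]; [lra|].
  rewrite Z1, Z2 in H0. lra.
Qed.

Open Scope R_scope.

Lemma den_pos Q th (z : C) (U0 U1 U2 U3 : C) :
  0 < Q -> (RtoC 1 - ee Q th z <> RtoC 0)%C ->
  let w1 := (2 * Re z)%R in let w2 := (2 * Im z)%R in
  exists G : C,
   ((U0 - U1) * RtoC (f_plus Q th w1 w2) + (U0 + U1) * RtoC (f_minus Q th w1 w2)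
    + U2 * RtoC (f_2 Q th w1 w2) + U3 * RtoC (f_3 Q th w1 w2)
   = Hf (U0 - U1) (U2 + Ci * U3) (U2 - Ci * U3) (U0 + U1) (Wp Q th z) * G)%C /\
   (G * G * (Wpd Q th z * Cconj (Wpd Q th z)) = RtoC 1)%C.
Proof.
  intros HQ Hn w1 w2.
  set (X := sqrt Q * h1 th w1 w2). set (Y := sqrt Q * h2 th w1 w2).
  assert (Ee : ee Q th z = cexp ((- Y)%R, X)) by (rewrite ee_eq; reflexivity).
  set (A := exp (- Y) * cos X). set (B := exp (- Y) * sin X). set (rho := exp Y).
  assert (Ee' : ee Q th z = (A, B)).
  { rewrite Ee. unfold cexp, Re, Im; simpl. reflexivity. }
  set (k1 := sqrt Q * cos th). set (k2 := - (sqrt Q * sin th)).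
  assert (Ek : kk Q th = (k1, k2)) by apply kk_eq.
  assert (Hs : sqrt Q * sqrt Q = Q) by (apply sqrt_sqrt; lra).
  assert (HsQ : 0 < sqrt Q) by (apply sqrt_lt_R0; exact HQ).
  assert (HQk : k1 ^ 2 + k2 ^ 2 = Q).
  { unfold k1, k2. pose proof (sin2_cos2 th). unfold Rsqr in H.
    transitivity ((sqrt Q * sqrt Q) * (sin th * sin th + cos th * cos th)). ring. rewrite Hs, H. ring. }
  assert (Hexp : exp (- Y) * rho = 1).
  { unfold rho. rewrite <- exp_plus. replace (- Y + Y) with 0 by ring. apply exp_0. }
  assert (Ecos : cos X = A * rho). { unfold A. transitivity (cos X * (exp (- Y) * rho)). rewrite Hexp; ring. ring. }
  assert (Esin : sin X = B * rho). { unfold B. transitivity (sin X * (exp (- Y) * rho)). rewrite Hexp; ring. ring. }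
  assert (Eem : exp (- Y) = (A ^ 2 + B ^ 2) * rho).
  { unfold A, B. pose proof (sin2_cos2 X). unfold Rsqr in H.
    transitivity (exp (- Y) * (exp (- Y) * rho) * (sin X * sin X + cos X * cos X)).
    rewrite Hexp, H. ring. ring. }
  assert (Hrho : rho <> 0) by (unfold rho; apply Rgt_not_eq, exp_pos).
  assert (H1 : (1 - A) ^ 2 + B ^ 2 <> 0).
  { intro Z. apply Hn. rewrite Ee'. assert (A = 1) by nra. assert (B = 0) by nra.
    rewrite H, H0. unfold RtoC, Cminus, Cplus, Copp; simpl. apply injective_projections; simpl; ring. }
  assert (H2 : k1 ^ 2 + k2 ^ 2 <> 0) by lra.
  destruct (stepB_pos A B rho k1 k2 H1 H2 Hrho) as (Fp & Fm & F2 & F3).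
  pose proof (stepB_pos_mod A B rho k1 k2 H1 H2) as Fmod. cbv zeta in Fmod.
  exists (RtoC (rho * ((1 - A) ^ 2 + B ^ 2) / (2 * (k1 ^ 2 + k2 ^ 2)))%R).
  split.
  - assert (Efp : f_plus Q th w1 w2 = / 4 * ((rho + (A ^ 2 + B ^ 2) * rho) / 2 + A * rho)).
    { unfold f_plus. destruct (Rle_dec Q 0); [lra|]. fold X Y. unfold cosh. rewrite Eem, Ecos. reflexivity. }
    assert (Efm : f_minus Q th w1 w2 = / (k1 ^ 2 + k2 ^ 2) * ((rho + (A ^ 2 + B ^ 2) * rho) / 2 - A * rho)).
    { unfold f_minus. destruct (Rle_dec Q 0); [lra|]. fold X Y. unfold cosh. rewrite Eem, Ecos, HQk. reflexivity. }
    assert (Ef2 : f_2 Q th w1 w2 = (- k2 * ((rho - (A ^ 2 + B ^ 2) * rho) / 2) - k1 * (B * rho)) / (k1 ^ 2 + k2 ^ 2)).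
    { unfold f_2. destruct (Rle_dec Q 0); [lra|]. fold X Y. unfold sinh. rewrite <- Eem, <- Esin, HQk.
      fold rho. unfold k1, k2. set (sQ := sqrt Q) in *. rewrite <- Hs. field. lra. }
    assert (Ef3 : f_3 Q th w1 w2 = (- (k1 * ((rho - (A ^ 2 + B ^ 2) * rho) / 2) - k2 * (B * rho))) / (k1 ^ 2 + k2 ^ 2)).
    { unfold f_3. destruct (Rle_dec Q 0); [lra|]. fold X Y. unfold sinh. rewrite <- Eem, <- Esin, HQk.
      fold rho. unfold k1, k2. set (sQ := sqrt Q) in *. rewrite <- Hs. field. lra. }
    rewrite Efp, Efm, Ef2, Ef3, Fp, Fm, F2, F3.
    unfold Wp. rewrite Ee', Ek. unfold Hf. ring.
  - unfold Wpd. rewrite Ee', Ek. rewrite Fmod.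
    f_equal. transitivity (rho * ((A ^ 2 + B ^ 2) * rho)). ring. rewrite <- Eem. rewrite Rmult_comm. exact Hexp.
Qed.

Lemma den_zero Q th (z : C) (U0 U1 U2 U3 : C) :
  Q <= 0 -> z <> RtoC 0 ->
  let w1 := (2 * Re z)%R in let w2 := (2 * Im z)%R in
  exists G : C,
   ((U0 - U1) * RtoC (f_plus Q th w1 w2) + (U0 + U1) * RtoC (f_minus Q th w1 w2)
    + U2 * RtoC (f_2 Q th w1 w2) + U3 * RtoC (f_3 Q th w1 w2)
   = Hf (U0 - U1) (U2 + Ci * U3) (U2 - Ci * U3) (U0 + U1) (W0 z) * G)%C /\
   (G * G * (W0d z * Cconj (W0d z)) = RtoC 1)%C.
Proof.
  intros HQ Hz w1 w2. destruct z as [z1 z2].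
  destruct (stepB_zero z1 z2 Hz) as (Fp & Fm & F2 & F3 & Fmod).
  exists (RtoC (2 * (z1 ^ 2 + z2 ^ 2))). split; [|exact Fmod].
  unfold f_plus, f_minus, f_2, f_3, w1, w2. destruct (Rle_dec Q 0); [|lra].
  unfold Re, Im; simpl fst; simpl snd.
  rewrite Fp, Fm, F2, F3. unfold W0, Hf. ring.
Qed.

Open Scope C_scope.

Lemma alg_pos Q th (z m0 : C) : 0 < Q ->
  RtoC 4 * m0 = RtoC Q * cexp (0%R, (- 2 * th)%R) ->
  RtoC 1 - ee Q th z <> RtoC 0 ->
  RtoC 2 * (m0 + Wp Q th z ^ 2) = Wpd Q th z /\ Wpd Q th z <> 0.
Proof.
  intros HQ Hk Hn.
  assert (Em : m0 = kk Q th ^ 2 / RtoC 4).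
  { rewrite kk_sq by lra. rewrite <- Hk. field. }
  assert (Hkk : kk Q th <> 0).
  { rewrite kk_eq. intro Z. injection Z as Z1 Z2.
    assert (HsQ : (0 < sqrt Q)%R) by (apply sqrt_lt_R0; exact HQ).
    pose proof (sin2_cos2 th). unfold Rsqr in H.
    apply Rmult_integral in Z1. destruct Z1 as [Z1|Z1]; [lra|].
    assert (sin th = 0%R) by nra. rewrite Z1, H0 in H. lra. }
  split.
  - unfold Wp, Wpd. rewrite Em. set (e := ee Q th z) in *. set (k := kk Q th) in *.
    transitivity (RtoC 2 * (k ^ 2 / RtoC 4 + (Ci * Ci) * (k / RtoC 2 * ((RtoC 1 + e) / (RtoC 1 - e))) ^ 2)).
    field. exact Hn. rewrite Ci2. field. exact Hn.
  - unfold Wpd. apply Cdiv_neq0. 2: apply Cpow_nz; exact Hn.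
    intro Z. apply (Cmult_neq_0 (RtoC 2 * kk Q th ^ 2) (ee Q th z)).
    apply Cmult_neq_0. intro Z2; injection Z2; lra. apply Cpow_nz; exact Hkk.
    apply cexp_neq0.
    transitivity (- (- (RtoC 2 * kk Q th ^ 2 * ee Q th z))). ring. rewrite Z. ring.
Qed.

Lemma alg_zero Q th (z m0 : C) : Q <= 0 -> 0 <= Q ->
  RtoC 4 * m0 = RtoC Q * cexp (0%R, (- 2 * th)%R) -> z <> RtoC 0 ->
  RtoC 2 * (m0 + W0 z ^ 2) = W0d z /\ W0d z <> 0.
Proof.
  intros HQ HQ' Hk Hz.
  assert (Q = 0%R) by lra. subst Q.
  assert (Em : m0 = 0). { transitivity (RtoC 4 * m0 / RtoC 4). field. rewrite Hk. field. }
  split.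
  - unfold W0, W0d. rewrite Em. field. exact Hz.
  - unfold W0d. intro Z. apply (Cinv_neq_0 (RtoC 2 * z ^ 2)) || idtac.
    assert (H2 : RtoC 2 * z ^ 2 <> 0). { apply Cmult_neq_0. intro Z2; injection Z2; lra. apply Cpow_nz; exact Hz. }
    apply C1_nz. rewrite <- (Cinv_r _ H2), Z. ring.
Qed.

Open Scope R_scope.
Open Scope C_scope.

Lemma part_iv_gen mu0 mu1 mu2 gam del (Wf Wdf : C -> C) (U : R * R -> Prop) (zeta : R * R -> C) p
  (u0 u1 u2 u3 : R) (fp fm f2 f3 : R) :
  / RtoC 2 * del ^ 2 * mu2 - gam * del * mu1 + gam ^ 2 * mu0 = RtoC 1 ->
  let alp := / RtoC 2 * (del * mu2 - gam * mu1) in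
  let bet := / RtoC 2 * del * mu1 - gam * mu0 in
  let om := fun p : R * R => (alp * zc p + bet) / (gam * zc p + del) in
  let v1 := fun q : R * R => (2 * Re (zeta q))%R in
  let v2 := fun q : R * R => (2 * Im (zeta q))%R in
  let u' := uprime alp bet gam del u0 u1 u2 u3 in
  open U -> U p -> gam * zc p + del <> RtoC 0 ->
  (forall q, U q -> om q = Wf (zeta q)) ->
  (forall h l, cd h 0 l -> h 0%R = zeta p -> cd (fun s => Wf (h s)) 0 (Wdf (zeta p) * l)) ->
  Wdf (zeta p) <> 0 ->
  (exists G : C,
     (u' 0%nat - u' 1%nat) * RtoC fp + (u' 0%nat + u' 1%nat) * RtoC fm
     + u' 2%nat * RtoC f2 + u' 3%nat * RtoC f3
     = Hf (u' 0%nat - u' 1%nat) (u' 2%nat + Ci * u' 3%nat) (u' 2%nat - Ci * u' 3%nat) (u' 0%nat + u' 1%nat)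
          (Wf (zeta p)) * G /\
     G * G * (Wdf (zeta p) * Cconj (Wdf (zeta p))) = RtoC 1) ->
  Omega u0 u1 u2 u3 (zc p) <> RtoC 0 ->
  forall (a : R * R) (d1 d2 : R),
    dir_deriv v1 p a d1 -> dir_deriv v2 p a d2 ->
    RtoC (fst a ^ 2 + snd a ^ 2)%R / (Omega u0 u1 u2 u3 (zc p)) ^ 2
    = RtoC (d1 ^ 2 + d2 ^ 2)%R /
      ((u' 0%nat - u' 1%nat) * RtoC fp + (u' 0%nat + u' 1%nat) * RtoC fm
       + u' 2%nat * RtoC f2 + u' 3%nat * RtoC f3) ^ 2.
Proof.
  intros HS alp bet om v1 v2 u' HU Hp Hn Hom HW Hnz [G [HG1 HG2]] HO a d1 d2 H1 H2.
  pose proof (mob_cd alp bet gam del p a Hn) as Cp.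
  pose proof (chain om zeta Wf Wdf U p a d1 d2 _ HU Hp Hom Cp HW H1 H2) as E.
  assert (Hdet : alp * del - bet * gam = RtoC 1) by (unfold alp, bet; rewrite det_i; exact HS).
  rewrite Hdet in E.
  apply (final_iv a d1 d2 (Wdf (zeta p)) (gam * zc p + del)
           (Hf (u' 0%nat - u' 1%nat) (u' 2%nat + Ci * u' 3%nat) (u' 2%nat - Ci * u' 3%nat) (u' 0%nat + u' 1%nat) (om p))
           G); auto.
  - rewrite E. field. exact Hn.
  - unfold u'. rewrite stepA1. unfold om. apply stepA. exact Hdet. exact Hn.
  - rewrite HG1. rewrite <- (Hom p Hp). reflexivity.
Qed.


Open Scope C_scope.

Theorem theorem8p1 (mu0 mu1 mu2 gam del : C) :
  / RtoC 2 * del ^ 2 * mu2 - gam * del * mu1 + gam ^ 2 * mu0 = RtoC 1 ->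
  let alp := / RtoC 2 * (del * mu2 - gam * mu1) in
  let bet := / RtoC 2 * del * mu1 - gam * mu0 in
  let xi := gckv mu0 mu1 mu2 in
  let m0' := mu0p mu0 mu1 mu2 in
  let om := fun p : R * R => (alp * zc p + bet) / (gam * zc p + del) in
  (* (i) in the coordinate omega, xi = (mu0' + om^2) d_om + c.c. *)
  (forall p : R * R, gam * zc p + del <> RtoC 0 ->
     cderiv_along xi om p (m0' + om p ^ 2)) /\
  (* (ii) uniqueness of canonical coordinates up to the stated Moebius maps *)
  (forall a b c d : C, a * d - b * c <> RtoC 0 ->
     let om' := fun p : R * R => (a * om p + b) / (c * om p + d) in
     let dom := fun p : R * R => gam * zc p + del <> RtoC 0 /\ c * om p + d <> RtoC 0 in
     (exists c0 : C, forall p : R * R, dom p -> cderiv_along xi om' p (c0 + om' p ^ 2)) ->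
     exists gam' del' : C,
       del' ^ 2 + m0' * gam' ^ 2 = RtoC 1 /\
       forall p : R * R, dom p ->
         gam' * om p + del' <> RtoC 0 /\
         om' p = (del' * om p - gam' * m0') / (gam' * om p + del')) /\
  (* (iii) and (iv) *)
  (forall (Q theta : R),
     (0 <= Q)%R -> (Q = 0%R \/ (0 <= theta < PI)%R) ->
     RtoC 4 * m0' = RtoC Q * cexp (0%R, (- 2 * theta)%R) ->
     forall (U : R * R -> Prop) (zeta : R * R -> C),
       open U ->
       let v1 := fun q : R * R => (2 * Re (zeta q))%R in
       let v2 := fun q : R * R => (2 * Im (zeta q))%R in
       (forall p : R * R, U p ->
          gam * zc p + del <> RtoC 0 /\
          omega_of_zeta_defined Q theta (zeta p) /\
          om p = omega_of_zeta Q theta (zeta p) /\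
          ex_filterdiff v1 (locally p) /\ ex_filterdiff v2 (locally p)) ->
       (* (iii): xi = d_{v1}, xi_perp = d_{v2} *)
       (forall p : R * R, U p ->
          deriv_along xi v1 p 1 /\ deriv_along xi v2 p 0 /\
          deriv_along (gckv (Ci * mu0) (Ci * mu1) (Ci * mu2)) v1 p 0 /\
          deriv_along (gckv (Ci * mu0) (Ci * mu1) (Ci * mu2)) v2 p 1) /\
       (* (iv): the metric g_u in the coordinates (v1, v2) *)
       (forall u0 u1 u2 u3 : R,
          (u0, u1, u2, u3) <> (0%R, 0%R, 0%R, 0%R) ->
          let u' := uprime alp bet gam del u0 u1 u2 u3 in
          forall p : R * R, U p ->
            Omega u0 u1 u2 u3 (zc p) <> RtoC 0 ->
            let w1 := v1 p in let w2 := v2 p in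
            let den := (u' 0%nat - u' 1%nat) * RtoC (f_plus Q theta w1 w2)
                       + (u' 0%nat + u' 1%nat) * RtoC (f_minus Q theta w1 w2)
                       + u' 2%nat * RtoC (f_2 Q theta w1 w2)
                       + u' 3%nat * RtoC (f_3 Q theta w1 w2) in
            forall (a : R * R) (d1 d2 : R),
              dir_deriv v1 p a d1 -> dir_deriv v2 p a d2 ->
              RtoC (fst a ^ 2 + snd a ^ 2)%R / (Omega u0 u1 u2 u3 (zc p)) ^ 2
              = RtoC (d1 ^ 2 + d2 ^ 2)%R / den ^ 2)).
Proof.
  intros HS alp bet xi m0' om.
  split; [|split].
  - intros p Hn. exact (part_i mu0 mu1 mu2 gam del HS p Hn).
  - exact (part_ii mu0 mu1 mu2 gam del HS).
  - intros Q theta HQ _ Hk U zeta HU v1 v2 Hall.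
    destruct (Rle_dec Q 0) as [HQ0|HQp].
    + assert (Hom : forall q, U q -> om q = W0 (zeta q)).
      { intros q Hq. destruct (Hall q Hq) as (_ & _ & E & _). rewrite E. apply om_zero; exact HQ0. }
      split.
      * intros p Hp. destruct (Hall p Hp) as (Hn & Hd & _ & F1 & F2).
        pose proof (def_zero _ _ _ HQ0 Hd) as Hz.
        destruct (alg_zero Q theta (zeta p) m0' HQ0 HQ Hk Hz) as [Halg Hnz].
        apply (part_iii_gen mu0 mu1 mu2 gam del W0 W0d U zeta p HS HU Hp Hn F1 F2 Hom); auto.
        intros h l Hh Hh0. rewrite <- Hh0. apply cd_W0. exact Hh. rewrite Hh0. exact Hz.
      * intros u0 u1 u2 u3 Hu0 u' p Hp HO w1 w2 den a d1 d2 H1 H2.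
        destruct (Hall p Hp) as (Hn & Hd & _ & F1 & F2).
        pose proof (def_zero _ _ _ HQ0 Hd) as Hz.
        destruct (alg_zero Q theta (zeta p) m0' HQ0 HQ Hk Hz) as [_ Hnz].
        apply (part_iv_gen mu0 mu1 mu2 gam del W0 W0d U zeta p u0 u1 u2 u3
                 (f_plus Q theta w1 w2) (f_minus Q theta w1 w2) (f_2 Q theta w1 w2) (f_3 Q theta w1 w2)
                 HS HU Hp Hn Hom); auto.
        -- intros h l Hh Hh0. rewrite <- Hh0. apply cd_W0. exact Hh. rewrite Hh0. exact Hz.
        -- exact (den_zero Q theta (zeta p) _ _ _ _ HQ0 Hz).
    + assert (HQp' : (0 < Q)%R) by lra.
      assert (Hom : forall q, U q -> om q = Wp Q theta (zeta q)).
      { intros q Hq. destruct (Hall q Hq) as (_ & _ & E & _). rewrite E. apply om_pos; exact HQp'. }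
      split.
      * intros p Hp. destruct (Hall p Hp) as (Hn & Hd & _ & F1 & F2).
        pose proof (def_pos _ _ _ HQp' Hd) as Hz.
        destruct (alg_pos Q theta (zeta p) m0' HQp' Hk Hz) as [Halg Hnz].
        apply (part_iii_gen mu0 mu1 mu2 gam del (Wp Q theta) (Wpd Q theta) U zeta p HS HU Hp Hn F1 F2 Hom); auto.
        intros h l Hh Hh0. rewrite <- Hh0. apply cd_Wp. exact Hh. rewrite Hh0. exact Hz.
      * intros u0 u1 u2 u3 Hu0 u' p Hp HO w1 w2 den a d1 d2 H1 H2.
        destruct (Hall p Hp) as (Hn & Hd & _ & F1 & F2).
        pose proof (def_pos _ _ _ HQp' Hd) as Hz.
        destruct (alg_pos Q theta (zeta p) m0' HQp' Hk Hz) as [_ Hnz].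
        apply (part_iv_gen mu0 mu1 mu2 gam del (Wp Q theta) (Wpd Q theta) U zeta p u0 u1 u2 u3
                 (f_plus Q theta w1 w2) (f_minus Q theta w1 w2) (f_2 Q theta w1 w2) (f_3 Q theta w1 w2)
                 HS HU Hp Hn Hom); auto.
        -- intros h l Hh Hh0. rewrite <- Hh0. apply cd_Wp. exact Hh. rewrite Hh0. exact Hz.
        -- exact (den_pos Q theta (zeta p) _ _ _ _ HQp' Hz).
Qed.
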